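(* Let $\mathbb{F}$ be a field, let $K=\mathbb{F}(a_1,b_1,a_2,b_2,\dots)$ be the purely transcendental extension of $\mathbb{F}$ generated by countably many indeterminates $a_n,b_n$ ($n\ge 1$), let $R=K\llbracket x,y\rrbracket$, and let $\sigma$ be the $\mathbb{F}$-algebra automorphism of $R$ described in the context. Let $G=\langle\sigma\rangle$ be the cyclic group of automorphisms of $R$ generated by $\sigma$. If $K$ has characteristic $p>0$, then $G$ is cyclic of order $p$; if $K$ has characteristic zero, then $G$ is infinite cyclic. In either case, the invariant ring $R^G=\{r\in R:\ g(r)=r \text{ for all } g\in G\}$ is not noetherian.
   Context: Setup: $\mathbb{F}$ is a field; $K=\mathbb{F}(a_1,b_1,a_2,b_2,\dots)$ where the $a_n,b_n$ ($n\ge1$) are algebraically independent indeterminates over $\mathbb{F}$; $R=K\llbracket x,y\rrbracket$ is the formal power series ring in $x,y$ over $K$, with maximal ideal $\mathfrak{m}=(x,y)R$. For $n\ge1$ set $f_n=a_nx+b_ny\in R$. Let $\sigma$ be the $\mathbb{F}$-algebra endomorphism of $R$ with $\sigma(x)=x$, $\sigma(y)=y$, $\sigma(a_n)=a_n+yf_{n+1}$, $\sigma(b_n)=b_n-xf_{n+1}$ for all $n\ge1$. (This is well defined: on $\mathbb{F}[a_1,b_1,\dots][x,y]$ it is given by substitution; nonzero elements of $\mathbb{F}[a_1,b_1,\dots]$ map to elements of $R$ with nonzero constant term, hence units, so the map extends to $K$, and it extends to power series by $\mathfrak{m}$-adic continuity since $\sigma(\mathfrak m)\subseteq\mathfrak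 m$. One has $\sigma(f_n)=f_n$ for all $n$, and $\sigma$ is an automorphism of $R$.) *)

(* Defs.v *)
From HB Require Import structures.
From mathcomp Require Import all_boot all_order all_algebra.
From mathcomp Require Import mpoly.
Set Implicit Arguments. Unset Strict Implicit. Unset Printing Implicit Defensive.
Import Order.TTheory GRing.Theory Num.Theory.
Local Open Scope ring_scope.

(* The generators are listed as one sequence v: v (2n) = a_(n+1),
   v (2n+1) = b_(n+1)  (0-based indexing a n = a_(n+1)). *)
Definition genseq (K : Type) (a b : nat -> K) (k : nat) : K :=
  if odd k then b k./2 else a k./2.

Definition evalF (F K : fieldType) (iota : {rmorphism F -> K})
  (v : nat -> K) (n : nat) (P : {mpoly F[n]}) : K :=
  (map_mpoly iota P).@[fun i : 'I_n => v (nat_of_ord i)].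

Definition alg_indep (F K : fieldType) (iota : {rmorphism F -> K})
  (v : nat -> K) : Prop :=
  forall (n : nat) (P : {mpoly F[n]}), evalF iota v P = 0 -> P = 0.

Definition field_generated (F K : fieldType) (iota : {rmorphism F -> K})
  (v : nat -> K) : Prop :=
  forall z : K, exists (n : nat) (P Q : {mpoly F[n]}),
    evalF iota v Q != 0 /\ z = evalF iota v P / evalF iota v Q.

(* a power series is its coefficient function: r i j = coefficient of x^i y^j *)
Definition ser (K : Type) := nat -> nat -> K.

Section Ser.
Variable K : comNzRingType.
Definition sadd (r s : ser K) : ser K := fun i j => r i j + s i j.
Definition sopp (r : ser K) : ser K := fun i j => - r i j.
Definition smul (r s : ser K) : ser K := fun i j =>
  \sum_(k < i.+1) \sum_(l < j.+1) r k l * s (i - k)%N (j - l)%N.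
Definition sC (c : K) : ser K := fun i j => if (i == 0%N) && (j == 0%N) then c else 0.
Definition sX : ser K := fun i j => if (i == 1%N) && (j == 0%N) then 1 else 0.
Definition sY : ser K := fun i j => if (i == 0%N) && (j == 1%N) then 1 else 0.
End Ser.
Arguments sX {K}.
Arguments sY {K}.

Section Noeth.
Variable K : comNzRingType.
Definition is_ideal (S I : ser K -> Prop) : Prop :=
  (forall r, I r -> S r) /\ I (sC 0) /\
  (forall r s, I r -> I s -> I (sadd r s)) /\
  (forall s r, S s -> I r -> I (smul s r)).
Definition noetherian (S : ser K -> Prop) : Prop :=
  forall I : nat -> (ser K -> Prop),
    (forall n, is_ideal S (I n)) ->
    (forall n r, I n r -> I n.+1 r) ->
    exists N, forall n, (N <= n)%N -> forall r, I n r <-> I N r.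
End Noeth.

Definition in_cyclic (T : Type) (sigma g : T -> T) : Prop :=
  exists k : nat,
    (forall r, g r = iter k sigma r) \/
    (forall r, g (iter k sigma r) = r /\ iter k sigma (g r) = r).

Definition invariants (T : Type) (sigma : T -> T) : T -> Prop :=
  fun r => forall g, in_cyclic sigma g -> g r = r.

(* Main.v *)
Require Import Defs.
From HB Require Import structures.
From mathcomp Require Import all_boot all_order all_algebra.
From mathcomp Require Import mpoly.
From mathcomp Require Import zify.
From Stdlib Require Import FunctionalExtensionality.
Lemma funext {A B : Type} (f g : A -> B) : (forall x, f x = g x) -> f = g.
Proof. exact: functional_extensionality. Qed.
Import GRing.Theory.
Local Open Scope ring_scope.
Set Implicit Arguments. Unset Strict Implicit.

Section SerLemmas.
Variable K : comNzRingType.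
Implicit Types u v w s t : ser K.
Implicit Types c d : K.

Definition shX u : ser K := fun i j => if i is i'.+1 then u i' j else 0.
Definition shY u : ser K := fun i j => if j is j'.+1 then u i j' else 0.

Lemma smul_sCl c u i j : smul (sC c) u i j = c * u i j.
Proof.
rewrite /smul big_ord_recl [X in X + _]big_ord_recl /= big1; last first.
  by move=> k _; rewrite /sC /= mul0r.
rewrite big1; last by move=> k _; rewrite big1 // => l _; rewrite /sC /= mul0r.
by rewrite /sC /= !subn0 !addr0.
Qed.

Lemma smulXl u i j : smul sX u i j = shX u i j.
Proof.
rewrite /smul /shX; case: i => [|i].
  by rewrite big_ord_recl big_ord0 addr0 big1 // => l _; rewrite /sX /= mul0r.
rewrite big_ord_recl big1 ?add0r; last by move=> l _; rewrite /sX /= mul0r.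
rewrite big_ord_recl [X in _ + X]big1 ?addr0; last first.
  by move=> k _; rewrite big1 // => l _; rewrite /sX /= mul0r.
rewrite big_ord_recl big1 ?addr0; last by move=> l _; rewrite /sX /= mul0r.
by rewrite /sX /= mul1r subn1 subn0.
Qed.

Lemma smulYl u i j : smul sY u i j = shY u i j.
Proof.
rewrite /smul /shY big_ord_recl [X in _ + X]big1 ?addr0; last first.
  by move=> k _; rewrite big1 // => l _; rewrite /sY /= mul0r.
case: j => [|j].
  by rewrite big_ord_recl big_ord0 addr0 /sY /= mul0r.
rewrite big_ord_recl big_ord_recl [X in _ + (_ + X)]big1 ?addr0; last by move=> l _; rewrite /sY /= mul0r.
by rewrite /sY /= mul0r mul1r add0r subn0 /bump /= add1n subn1.
Qed.

Lemma sum_only n (F : 'I_n -> K) (k0 : 'I_n) :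
  (forall k : 'I_n, (k : nat) <> k0 -> F k = 0) -> \sum_(k < n) F k = F k0.
Proof.
move=> h; rewrite (bigD1 k0) //= big1 ?addr0 // => k /eqP hk; apply: h => e.
by apply: hk; apply: val_inj.
Qed.

Lemma smulXr u i j : smul u sX i j = shX u i j.
Proof.
rewrite /smul /shX; case: i => [|i].
  rewrite big1 // => k _; rewrite big1 // => l _; rewrite /sX.
  have /negbTE -> : ~~ ((0 - k == 1)%N && (j - l == 0)%N) by lia.
  by rewrite mulr0.
rewrite (sum_only (k0 := Ordinal (leqW (ltnSn i)))) /=; last first.
  move=> k hk; rewrite big1 // => l _; rewrite /sX.
  have /negbTE -> : ~~ ((i.+1 - k == 1)%N && (j - l == 0)%N).
    by have := ltn_ord k; lia.
  by rewrite mulr0.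
rewrite (sum_only (k0 := Ordinal (ltnSn j))) /=; last first.
  move=> l hl; rewrite /sX.
  have /negbTE -> : ~~ ((i.+1 - i == 1)%N && (j - l == 0)%N).
    by have := ltn_ord l; lia.
  by rewrite mulr0.
by rewrite /sX subSnn subnn /= mulr1.
Qed.
Lemma smulYr u i j : smul u sY i j = shY u i j.
Proof.
rewrite /smul /shY.
rewrite (sum_only (k0 := Ordinal (ltnSn i))) /=; last first.
  move=> k hk; rewrite big1 // => l _; rewrite /sY.
  have /negbTE -> : ~~ ((i - k == 0)%N && (j - l == 1)%N).
    by have := ltn_ord k; lia.
  by rewrite mulr0.
case: j => [|j].
  rewrite big1 // => l _; rewrite /sY.
  have /negbTE -> : ~~ ((i - i == 0)%N && (0 - l == 1)%N) by lia.
  by rewrite mulr0.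
rewrite (sum_only (k0 := Ordinal (leqW (ltnSn j)))) /=; last first.
  move=> l hl; rewrite /sY.
  have /negbTE -> : ~~ ((i - i == 0)%N && (j.+1 - l == 1)%N).
    by have := ltn_ord l; lia.
  by rewrite mulr0.
by rewrite /sY subSnn subnn /= mulr1.
Qed.

Lemma smulDl u v w i j : smul (sadd u v) w i j = smul u w i j + smul v w i j.
Proof.
rewrite /smul -big_split; apply: eq_bigr => k _; rewrite -big_split.
by apply: eq_bigr => l _; rewrite /sadd mulrDl.
Qed.

Lemma smulDr u v w i j : smul w (sadd u v) i j = smul w u i j + smul w v i j.
Proof.
rewrite /smul -big_split; apply: eq_bigr => k _; rewrite -big_split.
by apply: eq_bigr => l _; rewrite /sadd mulrDr.
Qed.

Lemma smul_extr u v v' i j : (forall p q, v p q = v' p q) -> smul u v i j = smul u v' i j.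
Proof. by move=> h; rewrite /smul; apply: eq_bigr => k _; apply: eq_bigr => l _; rewrite h. Qed.

Lemma smul_extl u v v' i j : (forall p q, v p q = v' p q) -> smul v u i j = smul v' u i j.
Proof. by move=> h; rewrite /smul; apply: eq_bigr => k _; apply: eq_bigr => l _; rewrite h. Qed.

Lemma smul_scaler c u v i j : smul u (fun p q => c * v p q) i j = c * smul u v i j.
Proof.
rewrite /smul mulr_sumr; apply: eq_bigr => k _; rewrite mulr_sumr.
by apply: eq_bigr => l _; rewrite mulrCA.
Qed.

Lemma smul_shX t s i j : smul t (shX s) i j = shX (smul t s) i j.
Proof.
rewrite /smul /shX; case: i => [|i].
  by rewrite big1 // => k _; rewrite big1 // => l _; rewrite sub0n mulr0.
rewrite big_ord_recr /= subnn [X in _ + X]big1 ?addr0; last by move=> l _; rewrite mulr0.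
apply: eq_bigr => k _; apply: eq_bigr => l _.
by rewrite /= subSn ?(ltnSE (ltn_ord k)).
Qed.

Lemma smul_shY t s i j : smul t (shY s) i j = shY (smul t s) i j.
Proof.
rewrite /smul /shY; case: j => [|j].
  by rewrite big1 // => k _; rewrite big1 // => l _; rewrite sub0n mulr0.
apply: eq_bigr => k _.
rewrite big_ord_recr /= subnn mulr0 addr0.
apply: eq_bigr => l _.
by rewrite /= subSn ?(ltnSE (ltn_ord l)).
Qed.

Lemma smul00 u v : smul u v 0 0 = u 0%N 0%N * v 0%N 0%N.
Proof. by rewrite /smul !big_ord_recr !big_ord0 /= !add0r. Qed.

Lemma smul10 u v : smul u v 1 0 = u 0%N 0%N * v 1%N 0%N + u 1%N 0%N * v 0%N 0%N.
Proof. by rewrite /smul !big_ord_recr !big_ord0 /= !add0r. Qed.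

Lemma smul01 u v : smul u v 0 1 = u 0%N 0%N * v 0%N 1%N + u 0%N 1%N * v 0%N 0%N.
Proof. by rewrite /smul !big_ord_recr !big_ord0 /= !add0r. Qed.

Lemma smul11 u v : smul u v 1 1 = u 0%N 0%N * v 1%N 1%N + u 0%N 1%N * v 1%N 0%N
  + u 1%N 0%N * v 0%N 1%N + u 1%N 1%N * v 0%N 0%N.
Proof. by rewrite /smul !big_ord_recr !big_ord0 /= !add0r !subn0 !subnn addrA. Qed.

Lemma sC0 p q : sC (0 : K) p q = 0.
Proof. by rewrite /sC; case: ifP. Qed.

Lemma sC_add c d : sC (c + d) = sadd (sC c) (sC d).
Proof. by apply: funext => p; apply: funext => q; rewrite /sadd /sC; case: ifP; rewrite ?addr0. Qed.

Lemma sC_mul c d : sC (c * d) = smul (sC c) (sC d).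
Proof. by apply: funext => p; apply: funext => q; rewrite smul_sCl /sC; case: ifP; rewrite ?mulr0. Qed.

Definition fvec (a b : nat -> K) n : ser K := sadd (smul (sC (a n)) sX) (smul (sC (b n)) sY).

Lemma fvecE a b n p q : fvec a b n p q = a n * sX p q + b n * sY p q.
Proof. by rewrite /fvec /sadd !smul_sCl. Qed.

Lemma smul_fvec a b n u p q :
  smul u (fvec a b n) p q = a n * shX u p q + b n * shY u p q.
Proof.
rewrite (smul_extr _ (v' := sadd (fun i j => a n * sX i j) (fun i j => b n * sY i j))).
  by rewrite smulDr !smul_scaler smulXr smulYr.
by move=> i j; rewrite fvecE.
Qed.

Lemma smul_sumr n (F : nat -> ser K) t p q :
  smul t (fun i j => \sum_(k < n) F k i j) p q = \sum_(k < n) smul t (F k) p q.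
Proof.
rewrite /smul.
under eq_bigr => k _ do under eq_bigr => l _ do rewrite mulr_sumr.
under eq_bigr => k _ do rewrite exchange_big.
by rewrite exchange_big.
Qed.

Lemma smul_assoc_fvec a b n t s p q :
  smul t (smul s (fvec a b n)) p q = smul (smul t s) (fvec a b n) p q.
Proof.
rewrite smul_fvec (smul_extr _ (v' := sadd (fun i j => a n * shX s i j) (fun i j => b n * shY s i j))).
  by rewrite smulDr !smul_scaler smul_shX smul_shY.
by move=> i j; rewrite smul_fvec.
Qed.

Definition dA u : ser K := fun i j => u i.+1 j.
Definition dB u : ser K := fun i j => if i is 0%N then u 0%N j.+1 else 0.

Lemma decomp u : u = sadd (sC (u 0%N 0%N)) (sadd (smul sX (dA u)) (smul sY (dB u))).
Proof.
apply: funext => p; apply: funext => q.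
rewrite /sadd smulXl smulYl /shX /shY /sC /dA /dB.
by case: p => [|p]; case: q => [|q] /=; rewrite ?add0r ?addr0.
Qed.

Lemma decomp_app (tau : ser K -> ser K) :
  (forall r s, tau (sadd r s) = sadd (tau r) (tau s)) ->
  (forall r s, tau (smul r s) = smul (tau r) (tau s)) ->
  tau sX = sX -> tau sY = sY ->
  forall u p q, tau u p q = tau (sC (u 0%N 0%N)) p q + shX (tau (dA u)) p q + shY (tau (dB u)) p q.
Proof.
move=> hadd hmul hx hy u p q.
by rewrite {1}(decomp u) hadd hadd hmul hmul hx hy /sadd smulXl smulYl addrA.
Qed.
End SerLemmas.

Section Main.
Variables (F K : fieldType) (iota : {rmorphism F -> K}) (a b : nat -> K).
Hypothesis hindep : alg_indep iota (genseq a b).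
Hypothesis hgen : field_generated iota (genseq a b).
Variable sigma : ser K -> ser K.
Hypothesis hadd : forall r s, sigma (sadd r s) = sadd (sigma r) (sigma s).
Hypothesis hmul : forall r s, sigma (smul r s) = smul (sigma r) (sigma s).
Hypothesis hone : sigma (sC 1) = sC 1.
Hypothesis hF : forall c : F, sigma (sC (iota c)) = sC (iota c).
Hypothesis hx : sigma sX = sX.
Hypothesis hy : sigma sY = sY.
Hypothesis ha : forall n, sigma (sC (a n)) =
          sadd (sC (a n))
               (smul sY (sadd (smul (sC (a n.+1)) sX) (smul (sC (b n.+1)) sY))).
Hypothesis hb : forall n, sigma (sC (b n)) =
          sadd (sC (b n))
               (sopp (smul sX (sadd (smul (sC (a n.+1)) sX) (smul (sC (b n.+1)) sY)))).

Local Notation fv := (fvec a b).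

Lemma sig0 : sigma (sC 0) = sC 0.
Proof. by have := hF 0; rewrite rmorph0. Qed.

Lemma ha_coef n p q : sigma (sC (a n)) p q = sC (a n) p q + shY (fv n.+1) p q.
Proof. by rewrite ha /sadd smulYl. Qed.

Lemma hb_coef n p q : sigma (sC (b n)) p q = sC (b n) p q - shX (fv n.+1) p q.
Proof. by rewrite hb /sadd /sopp smulXl. Qed.

Lemma fv_fixed n : sigma (fv n) = fv n.
Proof.
rewrite /fvec hadd !hmul hx hy.
apply: funext => p; apply: funext => q.
rewrite /sadd smulXr smulYr /shX /shY !smul_sCl.
case: p => [|p]; case: q => [|q] /=; rewrite ?ha_coef ?hb_coef /sC /sX /sY /shX /shY /=.
- by rewrite !mulr0 addr0.
- by case: q => [|q] /=; rewrite ?subr0 ?mulr0 ?mulr1 ?add0r.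
- by case: p => [|p] /=; rewrite ?addr0 ?mulr0 ?mulr1 ?addr0.
- have e : (q.+1 == 0%N) = false by [].
  by rewrite fvecE add0r /sX /sY /= e !andbF add0r subrr !mulr0 addr0.
Qed.

Lemma yf_fixed n : sigma (smul sY (fv n)) = smul sY (fv n).
Proof. by rewrite hmul hy fv_fixed. Qed.

Lemma xf_fixed n : sigma (smul sX (fv n)) = smul sX (fv n).
Proof. by rewrite hmul hx fv_fixed. Qed.

Lemma iter_add k r s : iter k sigma (sadd r s) = sadd (iter k sigma r) (iter k sigma s).
Proof. by elim: k => //= k ->; rewrite hadd. Qed.

Lemma iter_mul k r s : iter k sigma (smul r s) = smul (iter k sigma r) (iter k sigma s).
Proof. by elim: k => //= k ->; rewrite hmul. Qed.

Lemma iter_fix k r : sigma r = r -> iter k sigma r = r.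
Proof. by move=> h; elim: k => //= k ->. Qed.

Lemma iter_a n k : iter k sigma (sC (a n)) =
  sadd (sC (a n)) (fun p q => k%:R * smul sY (fv n.+1) p q).
Proof.
elim: k => [|k IH].
  by apply: funext => p; apply: funext => q; rewrite /sadd mul0r addr0.
rewrite iterSr ha -/(fvec a b n.+1) iter_add IH iter_fix ?yf_fixed //.
apply: funext => p; apply: funext => q.
by rewrite /sadd /= -addrA mulrSr mulrDl mul1r.
Qed.

Lemma iter_b n k : iter k sigma (sC (b n)) =
  sadd (sC (b n)) (fun p q => - (k%:R * smul sX (fv n.+1) p q)).
Proof.
elim: k => [|k IH].
  by apply: funext => p; apply: funext => q; rewrite /sadd mul0r oppr0 addr0.
have hs : sigma (sopp (smul sX (fv n.+1))) = sopp (smul sX (fv n.+1)).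
  have h0 := hadd (smul sX (fv n.+1)) (sopp (smul sX (fv n.+1))).
  have e : sadd (smul sX (fv n.+1)) (sopp (smul sX (fv n.+1))) = sC 0.
    by apply: funext => p; apply: funext => q; rewrite /sadd /sopp subrr sC0.
  rewrite e sig0 xf_fixed in h0.
  apply: funext => p; apply: funext => q.
  have := congr1 (fun f => f p q) h0; rewrite /sadd /sopp sC0 => /eqP.
  by rewrite eq_sym addrC addr_eq0 => /eqP.
rewrite iterSr hb -/(fvec a b n.+1) iter_add IH (iter_fix _ hs).
apply: funext => p; apply: funext => q.
by rewrite /sadd /sopp /= mulrSr mulrDl mul1r opprD addrA.
Qed.

Lemma evalF_closed (Pk : K -> Prop) :
  (forall c, Pk (iota c)) -> (forall k, Pk (genseq a b k)) ->
  (forall x y, Pk x -> Pk y -> Pk (x + y)) -> (forall x y, Pk x -> Pk y -> Pk (x * y)) ->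
  forall n (P : {mpoly F[n]}), Pk (evalF iota (genseq a b) P).
Proof.
move=> hc hv hD hM n P; elim/mpolyind: P => [|c m p _ _ IH].
  by rewrite /evalF rmorph0 meval0 -(rmorph0 iota); apply: hc.
move: IH; rewrite /evalF rmorphD /= map_mpolyZ map_mpolyX mevalD mevalZ mevalX => IH.
apply: (hD _ _ _ IH); apply: (hM _ _ (hc c)).
apply: (big_ind Pk); [by rewrite -(rmorph1 iota) | exact: hM | ].
move=> i Hi; elim: (m i) => [|e IHe]; first by rewrite expr0 -(rmorph1 iota).
by rewrite exprS; apply: (hM _ _ (hv _) IHe).
Qed.

Lemma closure (Pk : K -> Prop) :
  (forall c, Pk (iota c)) -> (forall k, Pk (genseq a b k)) ->
  (forall x y, Pk x -> Pk y -> Pk (x + y)) -> (forall x y, Pk x -> Pk y -> Pk (x * y)) ->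
  (forall x, x != 0 -> Pk x -> Pk x^-1) -> forall z, Pk z.
Proof.
move=> hc hv hD hM hI z; have [n [P [Q [hQ ->]]]] := hgen z.
apply: (hM _ _ (evalF_closed hc hv hD hM P)).
exact: (hI _ hQ (evalF_closed hc hv hD hM Q)).
Qed.

Lemma L0 c : sigma (sC c) 0 0 = c /\ sigma (sC c) 1 0 = 0 /\ sigma (sC c) 0 1 = 0.
Proof.
move: c; apply: closure.
- by move=> c; rewrite hF /sC.
- move=> k; rewrite /genseq; case: odd.
    by rewrite !hb_coef /sC /shX /= fvecE /sX /sY /= !mulr0 !addr0 !subr0.
  by rewrite !ha_coef /sC /shY /= fvecE /sX /sY /= !mulr0 !addr0.
- move=> x y [h1 [h2 h3]] [h4 [h5 h6]].
  by rewrite sC_add hadd /sadd h1 h2 h3 h4 h5 h6 addr0.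
- move=> x y [h1 [h2 h3]] [h4 [h5 h6]].
  by rewrite sC_mul hmul smul00 smul10 smul01 h1 h2 h3 h4 h5 h6 !mulr0 !mul0r addr0.
- move=> x hx0 [h1 [h2 h3]].
  have e : smul (sigma (sC x)) (sigma (sC x^-1)) = sC 1.
    by rewrite -hmul -sC_mul divff // hone.
  have e00 := congr1 (fun f => f 0%N 0%N) e.
  have e10 := congr1 (fun f => f 1%N 0%N) e.
  have e01 := congr1 (fun f => f 0%N 1%N) e.
  rewrite /= smul00 h1 /sC /= in e00.
  rewrite /= smul10 h1 h2 mul0r addr0 /sC /= in e10.
  rewrite /= smul01 h1 h3 mul0r addr0 /sC /= in e01.
  split; first by apply: (mulfI hx0); rewrite e00 divff.
  split.
    by move/eqP: e10; rewrite mulf_eq0 (negbTE hx0) => /eqP.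
  by move/eqP: e01; rewrite mulf_eq0 (negbTE hx0) => /eqP.
Qed.

Lemma sdec u p q : sigma u p q =
  sigma (sC (u 0%N 0%N)) p q + shX (sigma (dA u)) p q + shY (sigma (dB u)) p q.
Proof. exact: decomp_app. Qed.

Lemma deg00 u : sigma u 0 0 = u 0%N 0%N.
Proof. by rewrite sdec /shX /shY !addr0; case: (L0 (u 0%N 0%N)). Qed.

Lemma deg10 u : sigma u 1 0 = u 1%N 0%N.
Proof.
rewrite sdec /shX /shY /= addr0 deg00; case: (L0 (u 0%N 0%N)) => _ [-> _].
by rewrite add0r.
Qed.

Lemma deg01 u : sigma u 0 1 = u 0%N 1%N.
Proof.
rewrite sdec /shX /shY /= deg00; case: (L0 (u 0%N 0%N)) => _ [_ ->].
by rewrite !add0r.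
Qed.

Lemma deg11 u : sigma u 1 1 = sigma (sC (u 0%N 0%N)) 1 1 + u 1%N 1%N.
Proof. by rewrite sdec /shX /shY /= deg01 deg10 /dB /dA addr0. Qed.

Section Tau.
Variable p : nat.
Hypothesis hp : p%:R = 0 :> K.

Lemma tau_sC c : iter p sigma (sC c) = sC c.
Proof.
move: c; apply: closure.
- by move=> c; apply: iter_fix.
- move=> k; rewrite /genseq; case: odd.
    rewrite iter_b; apply: funext => i; apply: funext => j.
    by rewrite /sadd hp mul0r oppr0 addr0.
  rewrite iter_a; apply: funext => i; apply: funext => j.
  by rewrite /sadd hp mul0r addr0.
- by move=> x y h1 h2; rewrite sC_add iter_add h1 h2.
- by move=> x y h1 h2; rewrite sC_mul iter_mul h1 h2.
- move=> x hx0 h1.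
  have e : smul (sC x) (iter p sigma (sC x^-1)) = sC 1.
    by rewrite -{1}h1 -iter_mul -sC_mul divff // iter_fix.
  apply: funext => i; apply: funext => j.
  have := congr1 (fun f => f i j) e; rewrite /= smul_sCl => e'.
  rewrite -[LHS]mul1r -(mulVf hx0) -mulrA e' /sC.
  by case: ifP; rewrite ?mulr1 ?mulr0.
Qed.

Lemma tau_all r : iter p sigma r = r.
Proof.
have dA_ := decomp_app (iter_add p) (iter_mul p) (iter_fix p hx) (iter_fix p hy).
suff H : forall n r i j, (i + j < n)%N -> iter p sigma r i j = r i j.
  by apply: funext => i; apply: funext => j; apply: (H (i + j).+1).
elim=> [|n IH] u i j hij; first by [].
rewrite dA_ tau_sC.
have e1 : shX (iter p sigma (dA u)) i j = shX (dA u) i j.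
  by move: hij; case: i => [|i] hij //=; apply: IH; lia.
rewrite e1; clear e1.
have e2 : shY (iter p sigma (dB u)) i j = shY (dB u) i j.
  by move: hij; case: j => [|j] hij //=; apply: IH; lia.
rewrite e2.
have := congr1 (fun f => f i j) (decomp u); rewrite /sadd smulXl smulYl addrA => e.
by rewrite e.
Qed.

End Tau.
Definition ssum (s : nat -> ser K) n : ser K := fun p q => \sum_(i < n) smul (s i) (fv i) p q.
Definition Iq n (r : ser K) : Prop := exists s : nat -> ser K,
  (forall i, sigma (s i) = s i) /\ forall p q, r p q = ssum s n p q.

Lemma ssum_fixed s n : (forall i, sigma (s i) = s i) -> sigma (ssum s n) = ssum s n.
Proof.
move=> hs; elim: n => [|n IH].
  have -> : ssum s 0 = sC 0.
    by apply: funext => p; apply: funext => q; rewrite /ssum big_ord0 sC0.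
  exact: sig0.
have -> : ssum s n.+1 = sadd (ssum s n) (smul (s n) (fv n)).
  by apply: funext => p; apply: funext => q; rewrite /ssum big_ord_recr.
by rewrite hadd IH hmul hs fv_fixed.
Qed.

Lemma fixed_inv r : sigma r = r -> invariants sigma r.
Proof.
move=> h g [k [hg | hg]]; first by rewrite hg iter_fix.
by have [h1 _] := hg r; rewrite iter_fix in h1.
Qed.

Lemma inv_fixed r : invariants sigma r -> sigma r = r.
Proof. by move=> h; apply: h; exists 1%N; left. Qed.

Lemma Iq_ideal n : is_ideal (invariants sigma) (Iq n).
Proof.
split; [|split; [|split]].
- move=> r [s [hs hr]]; apply: fixed_inv.
  have -> : r = ssum s n by apply: funext => p; apply: funext => q; apply: hr.
  exact: ssum_fixed.
- exists (fun _ => sC 0); split => [i|p q]; first exact: sig0.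
  by rewrite /ssum sC0 big1 // => i _; rewrite smul_sCl mul0r.
- move=> r t [s [hs hr]] [s' [hs' hr']].
  exists (fun i => sadd (s i) (s' i)); split; first by move=> i; rewrite hadd hs hs'.
  move=> p q; rewrite /ssum [in LHS]/sadd hr hr' /ssum -big_split.
  by apply: eq_bigr => i _; rewrite smulDl.
- move=> t r ht [s [hs hr]].
  exists (fun i => smul t (s i)); split; first by move=> i; rewrite hmul (inv_fixed ht) hs.
  move=> p q.
  have -> : smul t r p q = smul t (fun p q => \sum_(i < n) smul (s i) (fv i) p q) p q.
    by apply: smul_extr.
  rewrite (@smul_sumr _ n (fun i => smul (s i) (fv i))); apply: eq_bigr => i _; exact: smul_assoc_fvec.
Qed.

Lemma Iq_mono n r : Iq n r -> Iq n.+1 r.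
Proof.
move=> [s [hs hr]]; exists (fun i => if (i < n)%N then s i else sC 0); split.
  by move=> i; case: ifP => _; [apply: hs | apply: sig0].
move=> p q; rewrite hr /ssum big_ord_recr /= ltnn smul_sCl mul0r addr0.
by apply: eq_bigr => i _; rewrite /= ltn_ord.
Qed.

Lemma fv_in n : Iq n.+1 (fv n).
Proof.
exists (fun i => if i == n then sC 1 else sC 0); split.
  by move=> i; case: ifP => _; [apply: hone | apply: sig0].
move=> p q; rewrite /ssum big_ord_recr /= eqxx smul_sCl mul1r big1 ?add0r //.
move=> i _; rewrite /=.
have -> : (i == n :> nat) = false by apply/negbTE; rewrite neq_ltn ltn_ord.
by rewrite smul_sCl mul0r.
Qed.

Lemma sig_sC_sum m (G : nat -> K) p q :
  sigma (sC (\sum_(i < m) G i)) p q = \sum_(i < m) sigma (sC (G i)) p q.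
Proof.
elim: m => [|m IH]; first by rewrite !big_ord0 sig0 sC0.
by rewrite !big_ord_recr sC_add hadd /sadd IH.
Qed.

Lemma evalFM m (P Q : {mpoly F[m]}) w :
  evalF iota w (P * Q) = evalF iota w P * evalF iota w Q.
Proof. by rewrite /evalF rmorphM mevalM. Qed.

Lemma evalFB m (P Q : {mpoly F[m]}) w :
  evalF iota w (P - Q) = evalF iota w P - evalF iota w Q.
Proof. by rewrite /evalF rmorphB /= ?mevalB. Qed.

Lemma evalF_sum m k (G : nat -> {mpoly F[m]}) w :
  evalF iota w (\sum_(i < k) G i) = \sum_(i < k) evalF iota w (G i).
Proof.
elim: k => [|k IH]; first by rewrite !big_ord0 /evalF rmorph0 ?meval0.
by rewrite !big_ord_recr /= -IH /evalF rmorphD /= ?mevalD.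
Qed.

Lemma evalF_loc m (P : {mpoly F[m]}) w w' :
  (forall k, (k < m)%N -> w k = w' k) -> evalF iota w P = evalF iota w' P.
Proof. by move=> h; rewrite /evalF; apply: meval_eq => i /=; apply: h. Qed.

Lemma evalF_X m (i : 'I_m) w : evalF iota w 'X_i = w i.
Proof. by rewrite /evalF map_mpolyX mevalXU. Qed.

Lemma lift_ex m T (P : {mpoly F[m]}) : (m <= T)%N ->
  exists P' : {mpoly F[T]}, forall w, evalF iota w P' = evalF iota w P.
Proof.
move=> hmT; elim/mpolyind: P => [|c mm p _ _ [p' hp']].
  by exists 0 => w; rewrite /evalF !rmorph0 ?meval0.
exists (c *: \prod_(i < m) 'X_(widen_ord hmT i) ^+ (mm i) + p') => w.
rewrite /evalF !rmorphD /= !map_mpolyZ map_mpolyX !mevalZ mevalX.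
rewrite -/(evalF iota w p') hp' /evalF; congr (_ * _ + _).
rewrite rmorph_prod /= rmorph_prod /=; apply: eq_bigr => i _.
by rewrite !rmorphXn /= map_mpolyX mevalXU.
Qed.

Lemma gather (c : nat -> K) n : exists M, forall T, (M <= T)%N ->
  exists (Q : {mpoly F[T]}) (P : nat -> {mpoly F[T]}),
    evalF iota (genseq a b) Q != 0 /\
    (forall w, (forall k, (k < M)%N -> w k = genseq a b k) ->
       evalF iota w Q = evalF iota (genseq a b) Q) /\
    forall i, (i < n)%N -> c i * evalF iota (genseq a b) Q = evalF iota (genseq a b) (P i).
Proof.
elim: n => [|n [M0 HM0]].
  exists 0%N => T _; exists 1, (fun _ => 0); split; last split => //.
    by rewrite /evalF rmorph1 meval1 oner_neq0.
  by move=> w _; rewrite /evalF rmorph1 !meval1.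
have [m [P' [Q' [hQ' hc]]]] := hgen (c n).
exists (maxn M0 m) => T hT.
have [Q [P [hQ [hQl hP]]]] := HM0 T (leq_trans (leq_maxl _ _) hT).
have [P'' hP''] := lift_ex P' (leq_trans (leq_maxr _ _) hT).
have [Q'' hQ''] := lift_ex Q' (leq_trans (leq_maxr _ _) hT).
exists (Q * Q''), (fun i => if i == n then P'' * Q else P i * Q''); split; last split.
- by rewrite evalFM hQ'' mulf_neq0.
- move=> w hw; rewrite !evalFM !hQ'' hQl; last first.
    by move=> k hk; apply: hw; rewrite leq_max hk.
  congr (_ * _); apply: evalF_loc => k hk; apply: hw.
  by rewrite leq_max hk orbT.
- move=> i; rewrite ltnS leq_eqVlt => /orP [/eqP -> | hi].
    rewrite eqxx !evalFM hQ'' hP'' hc.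
    by rewrite [X in _ * X]mulrC mulrA divfK.
  by rewrite (ltn_eqF hi) !evalFM mulrA hP.
Qed.

Lemma genseq_even k : genseq a b k.*2 = a k.
Proof. by rewrite /genseq odd_double doubleK. Qed.

Lemma no_lin_rel n (c : nat -> K) : ~ (forall j, a (n + j) = \sum_(i < n) c i * a (i + j)).
Proof.
move=> hrel; have [M HM] := gather c n.
pose T := ((n + M).*2).+1.
have [Q [P [hQ [hQl hP]]]] := HM T ltac:(rewrite /T; lia).
pose R : {mpoly F[T]} := Q * 'X_(inord (n + M).*2) - \sum_(i < n) P i * 'X_(inord (i + M).*2).
have evR : forall w, evalF iota w R = evalF iota w Q * w (n + M).*2
    - \sum_(i < n) evalF iota w (P i) * w (i + M).*2.
  move=> w; rewrite /R evalFB evalFM evalF_X inordK //.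
  rewrite (@evalF_sum _ n (fun i => P i * 'X_(inord (i + M).*2)) w); congr (_ - _).
  apply: eq_bigr => i _; rewrite evalFM evalF_X inordK //.
  by rewrite /T; have := ltn_ord i; lia.
have R0 : R = 0.
  apply: hindep; rewrite evR genseq_even (hrel M) mulr_sumr.
  rewrite [X in _ - X](eq_bigr (fun i : 'I_n => evalF iota (genseq a b) Q * (c i * a (i + M)))).
    by rewrite subrr.
  by move=> i _; rewrite -(hP i (ltn_ord i)) genseq_even mulrA [_ * c i]mulrC.
pose w0 k := if (k < M)%N then genseq a b k else if k == (n + M).*2 then 1 else 0.
have := evR w0; rewrite R0 /evalF rmorph0 meval0 -/(evalF iota w0 Q).
rewrite hQl; last by move=> k hk; rewrite /w0 hk.
rewrite big1; last first.
  move=> i _; rewrite /w0.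
  have -> : ((i + M).*2 < M)%N = false by apply/negbTE; rewrite -leqNgt -!muln2; lia.
  have -> : ((i + M).*2 == (n + M).*2) = false.
    by apply/negbTE; have := ltn_ord i; rewrite -!muln2; lia.
  by rewrite mulr0.
rewrite /w0.
have -> : ((n + M).*2 < M)%N = false by apply/negbTE; rewrite -leqNgt -!muln2; lia.
rewrite eqxx mulr1 subr0 => /esym/eqP; by rewrite (negbTE hQ).
Qed.

Lemma key n : ~ Iq n (fv n).
Proof.
move=> [s [hs hr]].
pose c i := s i 0%N 0%N.
have h1 : a n = \sum_(i < n) c i * a i.
  have := hr 1%N 0%N; rewrite fvecE /sX /sY /= mulr1 mulr0 addr0 => ->.
  by rewrite /ssum; apply: eq_bigr => i _; rewrite smul_fvec /shX /shY /= mulr0 addr0 mulrC.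
have hD i : sigma (sC (c i)) 1 1 = 0.
  have := deg11 (s i); rewrite hs => /eqP.
  by rewrite -subr_eq subrr eq_sym => /eqP.
apply: (@no_lin_rel n c); elim=> [|j IH].
  by rewrite addn0 h1; apply: eq_bigr => i _; rewrite addn0.
have := congr1 (fun z => sigma (sC z) 1%N 1%N) IH.
rewrite /= ha_coef /sC /shY /= fvecE /sX /sY /= mulr1 mulr0 addr0 add0r addnS => ->.
rewrite (@sig_sC_sum n (fun i => c i * a (i + j)) 1%N 1%N); apply: eq_bigr => i _.
rewrite sC_mul hmul smul11 hD.
have [e1 [e2 e3]] := L0 (c i).
rewrite e1 e2 e3 ha_coef /sC /shY /= fvecE /sX /sY /= mulr1 mulr0 addr0 add0r addnS.
by rewrite !mul0r !addr0.
Qed.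

Lemma a1_neq0 : a 1 != 0.
Proof.
apply/eqP => h.
have hX : evalF iota (genseq a b) ('X_(inord 2) : {mpoly F[3]}) = 0 -> 'X_(inord 2) = 0 :> {mpoly F[3]}
  := @hindep 3 _.
rewrite evalF_X inordK // -[2%N]/(1.*2)%N genseq_even h in hX.
have := congr1 (fun P : {mpoly F[3]} => evalF iota (fun _ => 1) P) (hX erefl).
by rewrite evalF_X /evalF rmorph0 meval0 => /eqP; rewrite oner_eq0.
Qed.

Lemma iter_a11 k : iter k sigma (sC (a 0)) 1 1 = k%:R * a 1.
Proof.
rewrite iter_a /sadd /sC /= smulYl /shY /= fvecE /sX /sY /=.
by rewrite mulr1 mulr0 addr0 add0r.
Qed.

Lemma main_sec :
  (forall p : nat, p \in [pchar K] ->
     (forall r, iter p sigma r = r) /\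
     (forall k : nat, (0 < k < p)%N -> ~ (forall r, iter k sigma r = r))) /\
  ([pchar K] =i pred0 ->
     forall k : nat, (0 < k)%N -> ~ (forall r, iter k sigma r = r)) /\
  ~ noetherian (invariants sigma).
Proof.
split; [|split].
- move=> p hp; split; first exact: (tau_all (pcharf0 hp)).
  move=> k /andP [k0 kp] hk.
  have := congr1 (fun f => f 1%N 1%N) (hk (sC (a 0))).
  rewrite iter_a11 /sC /= => /eqP; rewrite mulf_eq0 (negbTE a1_neq0) orbF.
  rewrite -(dvdn_pcharf hp) => hdiv.
  by have := dvdn_leq k0 hdiv; lia.
- move=> h0 k k0 hk.
  have := congr1 (fun f => f 1%N 1%N) (hk (sC (a 0))).
  rewrite iter_a11 /sC /= => /eqP; rewrite mulf_eq0 (negbTE a1_neq0) orbF.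
  by move/pcharf0P: h0 => ->; move/eqP => e; rewrite e in k0.
- move=> hN; have [N HN] := hN (fun n => Iq n) Iq_ideal Iq_mono.
  apply: (key (n := N)); apply/(HN N.+1 (leqnSn N)); exact: fv_in.
Qed.

End Main.
Theorem mainTheorem1 (F K : fieldType) (iota : {rmorphism F -> K})
  (a b : nat -> K)
  (hindep : alg_indep iota (genseq a b))
  (hgen : field_generated iota (genseq a b))
  (sigma : ser K -> ser K)
  (hadd : forall r s, sigma (sadd r s) = sadd (sigma r) (sigma s))
  (hmul : forall r s, sigma (smul r s) = smul (sigma r) (sigma s))
  (hone : sigma (sC 1) = sC 1)
  (hF : forall c : F, sigma (sC (iota c)) = sC (iota c))
  (hx : sigma sX = sX) (hy : sigma sY = sY)
  (ha : forall n, sigma (sC (a n)) =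
          sadd (sC (a n))
               (smul sY (sadd (smul (sC (a n.+1)) sX) (smul (sC (b n.+1)) sY))))
  (hb : forall n, sigma (sC (b n)) =
          sadd (sC (b n))
               (sopp (smul sX (sadd (smul (sC (a n.+1)) sX) (smul (sC (b n.+1)) sY))))) :
  (forall p : nat, p \in [pchar K] ->
     (forall r, iter p sigma r = r) /\
     (forall k : nat, (0 < k < p)%N -> ~ (forall r, iter k sigma r = r))) /\
  ([pchar K] =i pred0 ->
     forall k : nat, (0 < k)%N -> ~ (forall r, iter k sigma r = r)) /\
  ~ noetherian (invariants sigma).
Proof. exact: (main_sec hindep hgen hadd hmul hone hF hx hy ha hb). Qed.
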